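(* Let $D_6=\langle\sigma,\tau\mid\sigma^6=\tau^2=1,\ \tau\sigma\tau^{-1}=\sigma^{-1}\rangle$ be the dihedral group of order $12$. Let $C_2^{(1)}=\langle\sigma^3\rangle$, $C_2^{(2)}=\langle\tau\rangle$, $C_2^{(3)}=\langle\sigma\tau\rangle$, $C_3=\langle\sigma^2\rangle$, $V_4=\langle\sigma^3,\tau\rangle$, $C_6=\langle\sigma\rangle$, $S_3^{(1)}=\langle\sigma^2,\tau\rangle$, $S_3^{(2)}=\langle\sigma^2,\sigma\tau\rangle$ (representatives of the conjugacy classes of nontrivial proper subgroups of $D_6$). Then there is an isomorphism of permutation $D_6$-lattices $\mathbb{Z}[D_6]\oplus\mathbb{Z}[D_6/V_4]^{\oplus2}\oplus\mathbb{Z}[D_6/C_6]\oplus\mathbb{Z}[D_6/S_3^{(1)}]\oplus\mathbb{Z}[D_6/S_3^{(2)}]\ \simeq\ \mathbb{Z}[D_6/C_2^{(1)}]\oplus\mathbb{Z}[D_6/C_2^{(2)}]\oplus\mathbb{Z}[D_6/C_2^{(3)}]\oplus\mathbb{Z}[D_6/C_3]\oplus\mathbb{Z}^{\oplus2}.$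
   Context: For a subgroup $H$ of a finite group $G$, $\mathbb{Z}[G/H]$ is the permutation $\mathbb{Z}[G]$-module with $\mathbb{Z}$-basis the left cosets $gH$, permuted by left multiplication; $\mathbb{Z}=\mathbb{Z}[G/G]$ is the trivial module. *)

(* Defs.v *)
From HB Require Import structures.
From mathcomp Require Import all_boot all_order all_algebra all_fingroup.
Unset Printing Implicit Defensive.
Import GRing.Theory.
Local Open Scope ring_scope.
Local Open Scope group_scope.

(* A direct sum  Z[G/H_0] (+) ... (+) Z[G/H_{k-1}]  of permutation modules,
   for a list Hs = [:: H_0; ...; H_{k-1}] of subgroups of G, is realized as the
   Z-module of integer-valued functions on the index type ('I_k * {set gT})
   supported on the basis  { (i, xH_i) | x in G }  (left cosets). *)

Definition pidx {gT : finGroupType} (Hs : seq {group gT}) :=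
  ('I_(size Hs) * {set gT})%type.

Definition pbasis {gT : finGroupType} (G : {group gT}) (Hs : seq {group gT})
  : {set pidx Hs} :=
  [set p : pidx Hs | p.2 \in lcosets (nth (1%G : {group gT}) Hs p.1) G].

Definition plat {gT : finGroupType} (G : {group gT}) (Hs : seq {group gT})
  : pred {ffun pidx Hs -> int} :=
  fun f => [forall p, (p \notin pbasis G Hs) ==> (f p == 0%R)].

Definition pact {gT : finGroupType} (Hs : seq {group gT}) (g : gT)
  (f : {ffun pidx Hs -> int}) : {ffun pidx Hs -> int} :=
  [ffun p : pidx Hs => f (p.1, g^-1 *: p.2)].

Definition perm_lattice_iso {gT : finGroupType} (G : {group gT})
  (Hs Ks : seq {group gT}) : Prop :=
  exists phi : {ffun pidx Hs -> int} -> {ffun pidx Ks -> int},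
    [/\ {in plat G Hs &, forall f1 f2, phi (f1 + f2)%R = (phi f1 + phi f2)%R},
        {in plat G Hs, forall f, phi f \in plat G Ks},
        {in plat G Hs &, injective phi},
        {in plat G Ks, forall h, exists2 f, f \in plat G Hs & phi f = h} &
        {in G, forall g, {in plat G Hs, forall f, phi (pact Hs g f) = pact Ks g (phi f)}}].

(* Main.v *)
From Pilot Require Import Defs.
From HB Require Import structures.
From mathcomp Require Import all_boot all_order all_algebra all_fingroup.
Local Open Scope group_scope.

Module PilotAux.
Import GRing.Theory.
Local Open Scope ring_scope.
Local Open Scope group_scope.
Set Implicit Arguments.
Unset Strict Implicit.

Section Generic.
Variables (gT : finGroupType) (G : {group gT}).

Definition tr (A : seq {group gT}) (g : gT) (p : pidx A) : pidx A := (p.1, g *: p.2).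

Lemma lcosets_tr (H : {set gT}) g C : g \in G ->
  (g *: C \in lcosets H G) = (C \in lcosets H G).
Proof.
move=> gG; apply/lcosetsP/lcosetsP => [[x xG eq]|[x xG ->]].
  exists (g^-1 * x); first by rewrite groupM ?groupV.
  by rewrite lcosetM -eq lcosetK.
by exists (g * x); rewrite ?groupM // lcosetM.
Qed.

Lemma basis_tr (A : seq {group gT}) g (p : pidx A) : g \in G -> (tr g p \in pbasis G A) = (p \in pbasis G A).
Proof. by move=> gG; rewrite !inE /= lcosets_tr. Qed.

Lemma trK (A : seq {group gT}) g : cancel (@tr A g) (@tr A g^-1).
Proof. by case=> i C; rewrite /tr /= lcosetK. Qed.

Lemma trKV (A : seq {group gT}) g : cancel (@tr A g^-1) (@tr A g).
Proof. by case=> i C; rewrite /tr /= lcosetKV. Qed.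

Definition kmap A B (Kr : pidx A -> pidx B -> int) (f : {ffun pidx A -> int})
  : {ffun pidx B -> int} :=
  [ffun q => if q \in pbasis G B then (\sum_(p in pbasis G A) f p * Kr p q)%R else 0%R].

Lemma kmap_plat (A B : seq {group gT}) (Kr : pidx A -> pidx B -> int) (f : {ffun pidx A -> int}) : kmap Kr f \in plat G B.
Proof.
apply/forallP => q; apply/implyP => qB; rewrite ffunE.
by rewrite (negbTE qB).
Qed.

Lemma kmap_add (A B : seq {group gT}) (Kr : pidx A -> pidx B -> int) (f1 f2 : {ffun pidx A -> int}) : kmap Kr (f1 + f2)%R = (kmap Kr f1 + kmap Kr f2)%R.
Proof.
apply/ffunP => q; rewrite !ffunE; case: ifP => _; last by rewrite addr0.
rewrite -big_split /=; apply: eq_bigr => p _; by rewrite ffunE mulrDl.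
Qed.

Lemma kmap_equiv (A B : seq {group gT}) (Kr : pidx A -> pidx B -> int) g (f : {ffun pidx A -> int}) :
  (forall p q, Kr (tr g p) (tr g q) = Kr p q) -> g \in G ->
  kmap Kr (pact A g f) = pact B g (kmap Kr f).
Proof.
move=> inv gG; apply/ffunP => q; rewrite !ffunE.
have -> : (q.1, g^-1 *: q.2) = tr g^-1 q by [].
rewrite basis_tr ?groupV //; case: ifP => // qB.
rewrite (reindex_inj (can_inj (@trK A g))) /=.
apply: eq_big => [p|p pB]; first by rewrite basis_tr.
rewrite ffunE.
have -> : ((tr g p).1, g^-1 *: (tr g p).2) = tr g^-1 (tr g p) by [].
by rewrite trK -{1}(trKV g q) inv.
Qed.

Lemma kmap_comp (A B : seq {group gT}) (M : pidx A -> pidx B -> int) (N : pidx B -> pidx A -> int) (f : {ffun pidx A -> int}) :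
  {in pbasis G A &, forall p p', (\sum_(q in pbasis G B) M p q * N q p')%R = (p == p')%:R} ->
  f \in plat G A -> kmap N (kmap M f) = f.
Proof.
move=> orth fP; apply/ffunP => p'; rewrite ffunE; case: ifP => p'B; last first.
  by move/forallP: fP => /(_ p') /implyP; rewrite p'B => /(_ isT) /eqP ->.
transitivity (\sum_(q in pbasis G B) \sum_(p in pbasis G A) f p * M p q * N q p')%R.
  by apply: eq_bigr => q qB; rewrite ffunE qB big_distrl.
rewrite exchange_big /=.
transitivity (\sum_(p in pbasis G A) f p * (p == p')%:R)%R.
  apply: eq_bigr => p pB; rewrite -orth // big_distrr /=.
  by apply: eq_bigr => q _; rewrite mulrA.
rewrite (bigD1 p') //= eqxx mulr1 big1 ?addr0 // => p /andP[_ /negbTE ->].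
by rewrite mulr0.
Qed.

Lemma kernel_iso (Hs Ks : seq {group gT})
  (M : pidx Hs -> pidx Ks -> int) (N : pidx Ks -> pidx Hs -> int) :
  (forall g p q, g \in G -> M (tr g p) (tr g q) = M p q) ->
  {in pbasis G Hs &, forall p p', (\sum_(q in pbasis G Ks) M p q * N q p')%R = (p == p')%:R} ->
  {in pbasis G Ks &, forall q q', (\sum_(p in pbasis G Hs) N q p * M p q')%R = (q == q')%:R} ->
  perm_lattice_iso G Hs Ks.
Proof.
move=> invM o1 o2; exists (kmap M); split.
- by move=> f1 f2 _ _; rewrite kmap_add.
- by move=> f _; apply: kmap_plat.
- move=> f1 f2 f1P f2P eq.
  by rewrite -(kmap_comp o1 f1P) -(kmap_comp o1 f2P) eq.
- move=> h hP; exists (kmap N h); first exact: kmap_plat.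
  exact: kmap_comp.
- by move=> g gG f _; apply: kmap_equiv => // p q; apply: invM.
Qed.
End Generic.


Local Open Scope ring_scope.
Definition code := ('I_6 * bool)%type.
Definition cd (a : nat) (b : bool) : code := (inZp a, b).
Definition c0 : code := cd 0 false.
Definition mc (x y : code) : code :=
  (inZp (if x.2 then (x.1 + (6 - y.1))%N else (x.1 + y.1)%N), x.2 (+) y.2).
Definition ic (x : code) : code := if x.2 then x else cd (6 - x.1) false.
Definition allc : seq code :=
  [seq cd a false | a <- iota 0 6] ++ [seq cd a true | a <- iota 0 6].

Definition has_c (P : pred code) := has P allc.
Definition relc (S : pred code) (a : code) (T : pred code) (b : code) : pred code :=
  fun c => has (fun x => S (mc (ic a) x) && T (mc (ic b) (mc x c))) allc.
Definition wsel (tb : seq int) (P : pred code) : int :=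
  if has P allc then nth 0 tb (find P allc) else 0.
Definition SpL (i : nat) : seq code :=
  match i with
  | 0 => [:: cd 0 false]
  | 1 => [:: cd 0 false; cd 3 false; cd 0 true; cd 3 true]
  | 2 => [:: cd 0 false; cd 3 false; cd 0 true; cd 3 true]
  | 3 => [:: cd 0 false; cd 1 false; cd 2 false; cd 3 false; cd 4 false; cd 5 false]
  | 4 => [:: cd 0 false; cd 2 false; cd 4 false; cd 0 true; cd 2 true; cd 4 true]
  | _ => [:: cd 0 false; cd 2 false; cd 4 false; cd 1 true; cd 3 true; cd 5 true]
  end.

Definition TpL (i : nat) : seq code :=
  match i with
  | 0 => [:: cd 0 false; cd 3 false]
  | 1 => [:: cd 0 false; cd 0 true]
  | 2 => [:: cd 0 false; cd 1 true]
  | 3 => [:: cd 0 false; cd 2 false; cd 4 false]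
  | 4 => [:: cd 0 false; cd 1 false; cd 2 false; cd 3 false; cd 4 false; cd 5 false; cd 0 true; cd 1 true; cd 2 true; cd 3 true; cd 4 true; cd 5 true]
  | _ => [:: cd 0 false; cd 1 false; cd 2 false; cd 3 false; cd 4 false; cd 5 false; cd 0 true; cd 1 true; cd 2 true; cd 3 true; cd 4 true; cd 5 true]
  end.

Definition RhL (i : nat) : seq code :=
  match i with
  | 0 => [:: cd 0 false; cd 1 false; cd 2 false; cd 3 false; cd 4 false; cd 5 false; cd 0 true; cd 1 true; cd 2 true; cd 3 true; cd 4 true; cd 5 true]
  | 1 => [:: cd 0 false; cd 1 false; cd 2 false]
  | 2 => [:: cd 0 false; cd 1 false; cd 2 false]
  | 3 => [:: cd 0 false; cd 0 true]
  | 4 => [:: cd 0 false; cd 1 false]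
  | _ => [:: cd 0 false; cd 1 false]
  end.

Definition RkL (i : nat) : seq code :=
  match i with
  | 0 => [:: cd 0 false; cd 1 false; cd 2 false; cd 0 true; cd 1 true; cd 2 true]
  | 1 => [:: cd 0 false; cd 1 false; cd 2 false; cd 3 false; cd 4 false; cd 5 false]
  | 2 => [:: cd 0 false; cd 1 false; cd 2 false; cd 3 false; cd 4 false; cd 5 false]
  | 3 => [:: cd 0 false; cd 1 false; cd 0 true; cd 1 true]
  | 4 => [:: cd 0 false]
  | _ => [:: cd 0 false]
  end.

Definition wMt (i j : nat) : seq int :=
  match i, j with
  | 0, 0 => [:: -1; -1; -1; -1; -1; -1; -2; 0; -2; -2; 0; -2]%Z
  | 0, 1 => [:: 1; -1; 0; 1; -1; 1; 1; -1; 0; 1; -1; 1]%Z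
  | 0, 2 => [:: 0; 2; 1; 0; -1; -1; -1; 0; 2; 1; 0; -1]%Z
  | 0, 3 => [:: 2; 1; 2; 1; 2; 1; 1; 1; 1; 1; 1; 1]%Z
  | 0, 4 => [:: 0; 0; 0; 0; 0; 0; 0; 0; 0; 0; 0; 0]%Z
  | 0, 5 => [:: 0; 0; 0; 0; 0; 0; 0; 0; 0; 0; 0; 0]%Z
  | 1, 0 => [:: -1; 0; -1; -1; 0; -1; -1; -1; 0; -1; -1; 0]%Z
  | 1, 1 => [:: 0; 0; 0; 0; 0; 0; 0; 0; 0; 0; 0; 0]%Z
  | 1, 2 => [:: 0; -1; 0; 0; -1; 0; 0; 0; -1; 0; 0; -1]%Z
  | 1, 3 => [:: 2; 2; 2; 2; 2; 2; 2; 2; 2; 2; 2; 2]%Z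
  | 1, 4 => [:: -1; -1; -1; -1; -1; -1; -1; -1; -1; -1; -1; -1]%Z
  | 1, 5 => [:: -2; -2; -2; -2; -2; -2; -2; -2; -2; -2; -2; -2]%Z
  | 2, 0 => [:: -1; 0; -2; -1; 0; -2; -1; -2; 0; -1; -2; 0]%Z
  | 2, 1 => [:: -2; 1; 1; -2; 1; 1; -2; 1; 1; -2; 1; 1]%Z
  | 2, 2 => [:: 2; -2; 2; 2; -2; 2; 2; 2; -2; 2; 2; -2]%Z
  | 2, 3 => [:: 2; 2; 2; 2; 2; 2; 2; 2; 2; 2; 2; 2]%Z
  | 2, 4 => [:: -1; -1; -1; -1; -1; -1; -1; -1; -1; -1; -1; -1]%Z
  | 2, 5 => [:: -1; -1; -1; -1; -1; -1; -1; -1; -1; -1; -1; -1]%Z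
  | 3, 0 => [:: 2; 2; 2; 2; 2; 2; -1; -1; -1; -1; -1; -1]%Z
  | 3, 1 => [:: 1; 1; 1; 1; 1; 1; 1; 1; 1; 1; 1; 1]%Z
  | 3, 2 => [:: -2; -2; -2; -2; -2; -2; -2; -2; -2; -2; -2; -2]%Z
  | 3, 3 => [:: 2; 2; 2; 2; 2; 2; -2; -2; -2; -2; -2; -2]%Z
  | 3, 4 => [:: -1; -1; -1; -1; -1; -1; -1; -1; -1; -1; -1; -1]%Z
  | 3, 5 => [:: 1; 1; 1; 1; 1; 1; 1; 1; 1; 1; 1; 1]%Z
  | 4, 0 => [:: 0; 0; 0; 0; 0; 0; 0; 0; 0; 0; 0; 0]%Z
  | 4, 1 => [:: 0; -1; 0; -1; 0; -1; 0; -1; 0; -1; 0; -1]%Z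
  | 4, 2 => [:: 2; 2; 2; 2; 2; 2; 2; 2; 2; 2; 2; 2]%Z
  | 4, 3 => [:: -1; 0; -1; 0; -1; 0; -1; 0; -1; 0; -1; 0]%Z
  | 4, 4 => [:: 0; 0; 0; 0; 0; 0; 0; 0; 0; 0; 0; 0]%Z
  | 4, 5 => [:: 1; 1; 1; 1; 1; 1; 1; 1; 1; 1; 1; 1]%Z
  | 5, 0 => [:: -2; -2; -2; -2; -2; -2; -2; -2; -2; -2; -2; -2]%Z
  | 5, 1 => [:: 1; 1; 1; 1; 1; 1; 1; 1; 1; 1; 1; 1]%Z
  | 5, 2 => [:: -1; -2; -1; -2; -1; -2; -2; -1; -2; -1; -2; -1]%Z
  | 5, 3 => [:: 0; 2; 0; 2; 0; 2; 2; 0; 2; 0; 2; 0]%Z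
  | 5, 4 => [:: 1; 1; 1; 1; 1; 1; 1; 1; 1; 1; 1; 1]%Z
  | 5, 5 => [:: 2; 2; 2; 2; 2; 2; 2; 2; 2; 2; 2; 2]%Z
  | _, _ => [::]
  end.

Definition wNt (j i : nat) : seq int :=
  match j, i with
  | 0, 0 => [:: -29; -34; -26; -29; -34; -26; -27; -25; -33; -27; -25; -33]%Z
  | 0, 1 => [:: 10; -33; -29; 10; -33; -29; 10; -33; -29; 10; -33; -29]%Z
  | 0, 2 => [:: 64; 74; 73; 64; 74; 73; 64; 74; 73; 64; 74; 73]%Z
  | 0, 3 => [:: -29; -29; -29; -29; -29; -29; -30; -30; -30; -30; -30; -30]%Z
  | 0, 4 => [:: -17; -17; -17; -17; -17; -17; -17; -17; -17; -17; -17; -17]%Z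
  | 0, 5 => [:: 50; 50; 50; 50; 50; 50; 50; 50; 50; 50; 50; 50]%Z
  | 1, 0 => [:: 16; 11; 15; 13; 11; 17; 16; 17; 11; 13; 15; 11]%Z
  | 1, 1 => [:: 25; -1; -1; 25; -1; -1; 25; -1; -1; 25; -1; -1]%Z
  | 1, 2 => [:: -37; -31; -31; -37; -31; -31; -37; -31; -31; -37; -31; -31]%Z
  | 1, 3 => [:: 14; 14; 14; 14; 14; 14; 14; 14; 14; 14; 14; 14]%Z
  | 1, 4 => [:: 8; 7; 8; 7; 8; 7; 8; 7; 8; 7; 8; 7]%Z
  | 1, 5 => [:: -24; -24; -24; -24; -24; -24; -24; -24; -24; -24; -24; -24]%Z
  | 2, 0 => [:: 4; 1; 1; 4; 0; 2; 1; 4; 2; 0; 4; 1]%Z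
  | 2, 1 => [:: 7; 7; -11; 7; 7; -11; 7; 7; -11; 7; 7; -11]%Z
  | 2, 2 => [:: -6; -6; -2; -6; -6; -2; -6; -6; -2; -6; -6; -2]%Z
  | 2, 3 => [:: 2; 2; 2; 2; 2; 2; 2; 2; 2; 2; 2; 2]%Z
  | 2, 4 => [:: 1; 1; 1; 1; 1; 1; 1; 1; 1; 1; 1; 1]%Z
  | 2, 5 => [:: -4; -3; -4; -3; -4; -3; -3; -4; -3; -4; -3; -4]%Z
  | 3, 0 => [:: -43; -43; -43; -43; -43; -43; -44; -45; -44; -45; -44; -45]%Z
  | 3, 1 => [:: -26; -26; -26; -26; -26; -26; -26; -26; -26; -26; -26; -26]%Z
  | 3, 2 => [:: 106; 106; 106; 106; 106; 106; 106; 106; 106; 106; 106; 106]%Z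
  | 3, 3 => [:: -45; -45; -45; -45; -45; -45; -44; -44; -44; -44; -44; -44]%Z
  | 3, 4 => [:: -25; -26; -25; -26; -25; -26; -25; -26; -25; -26; -25; -26]%Z
  | 3, 5 => [:: 75; 76; 75; 76; 75; 76; 76; 75; 76; 75; 76; 75]%Z
  | 4, 0 => [:: -98; -98; -98; -98; -98; -98; -98; -98; -98; -98; -98; -98]%Z
  | 4, 1 => [:: -59; -59; -59; -59; -59; -59; -59; -59; -59; -59; -59; -59]%Z
  | 4, 2 => [:: 238; 238; 238; 238; 238; 238; 238; 238; 238; 238; 238; 238]%Z
  | 4, 3 => [:: -100; -100; -100; -100; -100; -100; -100; -100; -100; -100; -100; -100]%Z
  | 4, 4 => [:: -58; -58; -58; -58; -58; -58; -58; -58; -58; -58; -58; -58]%Z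
  | 4, 5 => [:: 169; 169; 169; 169; 169; 169; 169; 169; 169; 169; 169; 169]%Z
  | 5, 0 => [:: -70; -70; -70; -70; -70; -70; -70; -70; -70; -70; -70; -70]%Z
  | 5, 1 => [:: -41; -41; -41; -41; -41; -41; -41; -41; -41; -41; -41; -41]%Z
  | 5, 2 => [:: 169; 169; 169; 169; 169; 169; 169; 169; 169; 169; 169; 169]%Z
  | 5, 3 => [:: -71; -71; -71; -71; -71; -71; -71; -71; -71; -71; -71; -71]%Z
  | 5, 4 => [:: -40; -40; -40; -40; -40; -40; -40; -40; -40; -40; -40; -40]%Z
  | 5, 5 => [:: 121; 121; 121; 121; 121; 121; 121; 121; 121; 121; 121; 121]%Z
  | _, _ => [::]
  end.

Definition Sp (i : nat) : pred code := fun c => c \in SpL i.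
Definition Tp (j : nat) : pred code := fun c => c \in TpL j.
Definition tabv (tb : seq int) (d : code) : int := nth 0 tb (index d allc).
Definition fM i j d := tabv (wMt i j) d.
Definition fN j i d := tabv (wNt j i) d.
Definition sumf {T} (s : seq T) (F : T -> int) := foldr (fun x acc => F x + acc) 0 s.
Definition check1 :=
  all (fun i => all (fun i' => all (fun a => all (fun a' =>
    sumf (iota 0 6) (fun j => sumf (RkL j) (fun b => fM i j (mc (ic a) b) * fN j i' (mc (ic b) a')))
    == (if (i == i') && Sp i (mc (ic a) a') then 1 else 0)) (RhL i')) (RhL i)) (iota 0 6)) (iota 0 6).
Definition check2 :=
  all (fun j => all (fun j' => all (fun b => all (fun b' =>
    sumf (iota 0 6) (fun i => sumf (RhL i) (fun a => fN j i (mc (ic b) a) * fM i j' (mc (ic a) b')))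
    == (if (j == j') && Tp j (mc (ic b) b') then 1 else 0)) (RkL j')) (RkL j)) (iota 0 6)) (iota 0 6).
Definition check3 :=
  all (fun i => all (fun j => all (fun d =>
     (wsel (wMt i j) (relc (Sp i) c0 (Tp j) d) == fM i j d) &&
     (wsel (wNt j i) (relc (Tp j) c0 (Sp i) d) == fN j i d)) allc) (iota 0 6)) (iota 0 6).
Lemma check3_ok : check3. Proof. vm_compute. reflexivity. Qed.
Lemma check1_ok : check1. Proof. vm_compute. reflexivity. Qed.
Lemma check2_ok : check2. Proof. vm_compute. reflexivity. Qed.

Fixpoint cl (gc : seq code) (n : nat) (c : code) : bool :=
  match n with
  | 0 => c \in gc
  | n'.+1 => cl gc n' c || has (fun x => cl gc n' x && cl gc n' (mc (ic x) c)) allc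
  end.
Definition grpchk (gc : seq code) (P : pred code) n :=
  [&& P c0, all (fun x => all (fun y => P x ==> P y ==> P (mc x y)) allc) allc,
      all P gc & all (fun c => P c ==> cl gc n c) allc].
Lemma grpchk_ok :
  [&& grpchk [:: cd 3 false; cd 0 true] (Sp 1) 2,
      grpchk [:: cd 1 false] (Sp 3) 3,
      grpchk [:: cd 2 false; cd 0 true] (Sp 4) 2,
      grpchk [:: cd 2 false; cd 1 true] (Sp 5) 2,
      grpchk [:: cd 3 false] (Tp 0) 2,
      grpchk [:: cd 0 true] (Tp 1) 2,
      grpchk [:: cd 1 true] (Tp 2) 2 &
      grpchk [:: cd 2 false] (Tp 3) 2].
Proof. vm_compute. reflexivity. Qed.

Definition coschk (P : pred code) (R : seq code) :=
  [&& all (fun b => all (fun b' => P (mc (ic b) b') ==> (b == b')) R) R, uniq R &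
      all (fun a => has (fun b => P (mc (ic b) a)) R) allc].
Lemma coschk_ok : all (fun i => coschk (Sp i) (RhL i) && coschk (Tp i) (RkL i)) (iota 0 6).
Proof. vm_compute. reflexivity. Qed.


Local Open Scope group_scope.
Lemma mem_allc c : c \in allc.
Proof.
case: c => [[a Ha] b].
do 6 (case: a Ha => [|a] Ha; first by case: b).
by [].
Qed.

Lemma allcP (P : pred code) : all P allc -> forall c, P c.
Proof. by move/allP => H c; apply: H; apply: mem_allc. Qed.

Definition idchk :=
  all (fun x => [&& mc (ic x) x == c0, mc c0 x == x &
      all (fun y => [&& mc (ic x) (mc x y) == y, mc x (mc (ic x) y) == y &
         all (fun z => mc (mc x y) z == mc x (mc y z)) allc]) allc]) allc.
Lemma idchk_ok : idchk. Proof. vm_compute. reflexivity. Qed.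

Lemma mc_icl x : mc (ic x) x = c0.
Proof. by move/allcP: idchk_ok => /(_ x) /and3P[/eqP]. Qed.
Lemma mc0 x : mc c0 x = x.
Proof. by move/allcP: idchk_ok => /(_ x) /and3P[_ /eqP]. Qed.
Lemma mcKl x y : mc (ic x) (mc x y) = y.
Proof. by move/allcP: idchk_ok => /(_ x) /and3P[_ _ /allcP /(_ y) /and3P[/eqP]]. Qed.
Lemma mcKVl x y : mc x (mc (ic x) y) = y.
Proof. by move/allcP: idchk_ok => /(_ x) /and3P[_ _ /allcP /(_ y) /and3P[_ /eqP]]. Qed.
Lemma mcA x y z : mc (mc x y) z = mc x (mc y z).
Proof. by move/allcP: idchk_ok => /(_ x) /and3P[_ _ /allcP /(_ y) /and3P[_ _ /allcP /(_ z) /eqP]]. Qed.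
Lemma ic_c0 : ic c0 = c0. Proof. by apply/eqP. Qed.

Section Spec.
Variables (gT : finGroupType) (s t : gT).
Hypotheses (hs : s ^+ 6 = 1) (ht : t ^+ 2 = 1) (hts : t * s * t^-1 = s^-1)
  (hG : #|<<[set s; t]>>| = 12%N).

Definition e (c : code) : gT := s ^+ c.1 * t ^+ c.2.

Lemma ts1 : t * s = s^-1 * t.
Proof. by rewrite -hts mulgKV. Qed.

Lemma tsX c : t * s ^+ c = (s ^+ c)^-1 * t.
Proof.
elim: c => [|c IH]; first by rewrite expg0 invg1 mulg1 mul1g.
rewrite expgS mulgA ts1 -mulgA IH mulgA -invMg -expgSr expgS.
by [].
Qed.

Lemma invX c : (c <= 6)%N -> (s ^+ c)^-1 = s ^+ (6 - c).
Proof.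
move=> hc.
have E : s ^+ (6 - c) * s ^+ c = 1 by rewrite -expgD subnK.
by rewrite -[LHS]mul1g -E mulgK.
Qed.

Lemma e_mul x y : e (mc x y) = e x * e y.
Proof.
case: x y => [a b] [c d]; rewrite /e /mc /=.
rewrite (expg_mod _ hs).
have hc : (c <= 6)%N by apply: ltnW.
case: b.
- rewrite expgD -!mulgA; congr (_ * _).
  rewrite (mulgA t) tsX invX // -!mulgA; congr (_ * _).
  by case: d => /=; rewrite ?expg1 ?expg0 ?mulg1 // -expgS ht.
- by rewrite expgD expg0 mulg1 -!mulgA.
Qed.

Lemma e_c0 : e c0 = 1.
Proof. by rewrite /e /= expg0 mulg1. Qed.

Lemma e_ic x : e (ic x) = (e x)^-1.
Proof.
have E : e (ic x) * e x = 1 by rewrite -e_mul mc_icl e_c0.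
by rewrite -[e (ic x)](mulgK (e x)) E mul1g.
Qed.


Lemma e_cd a b : (a < 6)%N -> e (cd a b) = s ^+ a * t ^+ b.
Proof. by move=> ha; rewrite /e /= modn_small. Qed.

Definition ES (P : pred code) : {set gT} := [set e c | c in P].

Lemma ES_group (P : pred code) : P c0 -> (forall x y, P x -> P y -> P (mc x y)) ->
  group_set (ES P).
Proof.
move=> P0 Pm; apply/group_setP; split.
  by rewrite -e_c0; apply: imset_f.
move=> _ _ /imsetP[x Px ->] /imsetP[y Py ->]; rewrite -e_mul.
by apply: imset_f; apply: Pm.
Qed.

Lemma cl_gen (A : {set gT}) gc n c : (forall c, c \in gc -> e c \in A) ->
  cl gc n c -> e c \in <<A>>.
Proof.
move=> hA; elim: n c => [|n IH] c; first by move/hA; apply: mem_gen.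
have -> : cl gc n.+1 c = cl gc n c || has (fun x => cl gc n x && cl gc n (mc (ic x) c)) allc by [].
case/orP; first exact: IH.
move=> /hasP [x _ /andP[h1 h2]].
by rewrite -(mcKVl x c) e_mul groupM // IH.
Qed.

Lemma e_inG c : e c \in <<[set s; t]>>.
Proof. by rewrite /e groupM // groupX // mem_gen // !inE eqxx ?orbT. Qed.

Lemma G_ES : <<[set s; t]>> \subset ES predT.
Proof.
have gs := @ES_group predT isT (fun _ _ _ _ => isT).
rewrite -[ES predT]/(gval (Group gs)) gen_subG; apply/subsetP => x.
rewrite !inE => /orP[] /eqP ->.
  have -> : s = e (cd 1 false) by rewrite e_cd // expg1 expg0 mulg1.
  by apply: imset_f.
have -> : t = e (cd 0 true) by rewrite e_cd // expg1 expg0 mul1g.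
by apply: imset_f.
Qed.

Lemma e_inj : injective e.
Proof.
have H : {in predT &, injective e}.
  apply/imset_injP; rewrite eqn_leq leq_imset_card /=.
  rewrite card_prod !card_ord card_bool /=.
  apply: (@leq_trans #|<<[set s; t]>>|); first by rewrite hG.
  by apply: subset_leq_card; apply: G_ES.
by move=> x y; apply: H.
Qed.

Lemma G_e g : g \in <<[set s; t]>> -> exists a, g = e a.
Proof. by move/(subsetP G_ES)/imsetP => [a _ ->]; exists a. Qed.

Lemma gen_mem (A : {set gT}) (gc : seq code) (P : pred code) n :
  (forall x, x \in A -> exists2 c, c \in gc & x = e c) ->
  (forall c, c \in gc -> e c \in A) ->
  grpchk gc P n -> forall c, (e c \in <<A>>) = P c.
Proof.
move=> hA1 hA2 /and4P[P0 /allcP Pm /allP Pg /allcP Pcl] c.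
have Pm' : forall x y, P x -> P y -> P (mc x y).
  by move=> x y px py; move/allcP: (Pm x) => /(_ y); rewrite px py.
have gs := ES_group P0 Pm'.
apply/idP/idP => [hc|pc]; last by apply: (cl_gen (n:=n) hA2); have := Pcl c; rewrite pc.
have : <<A>> \subset ES P.
  rewrite -[ES P]/(gval (Group gs)) gen_subG; apply/subsetP => x /hA1 [y yg ->].
  by apply: imset_f; apply: Pg.
by move/subsetP/(_ _ hc)/imsetP => [y py /e_inj ->].
Qed.


Lemma gen_mem2 x y P n : grpchk [:: x; y] P n ->
  forall c, (e c \in <<[set e x; e y]>>) = P c.
Proof.
apply: gen_mem.
  by move=> z; rewrite !inE => /orP[] /eqP ->; [exists x | exists y]; rewrite ?inE ?eqxx ?orbT.
by move=> c; rewrite !inE => /orP[] /eqP ->; rewrite eqxx ?orbT.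
Qed.

Lemma gen_mem1 x P n : grpchk [:: x] P n ->
  forall c, (e c \in <<[set e x]>>) = P c.
Proof.
apply: gen_mem.
  by move=> z; rewrite !inE => /eqP ->; exists x; rewrite ?inE ?eqxx.
by move=> c; rewrite !inE => /eqP ->.
Qed.

Lemma Es3 : s ^+ 3 = e (cd 3 false). Proof. by rewrite e_cd // expg0 mulg1. Qed.
Lemma Es2 : s ^+ 2 = e (cd 2 false). Proof. by rewrite e_cd // expg0 mulg1. Qed.
Lemma Es1 : s = e (cd 1 false). Proof. by rewrite e_cd // expg1 expg0 mulg1. Qed.
Lemma Et : t = e (cd 0 true). Proof. by rewrite e_cd // expg1 expg0 mul1g. Qed.
Lemma Est : s * t = e (cd 1 true). Proof. by rewrite e_cd // !expg1. Qed.

Definition Hs : seq {group gT} :=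
    [:: (1%G : {group gT}); <<[set (s ^+ 3)%g; t]>>%G; <<[set (s ^+ 3)%g; t]>>%G; <[s]>%G;
        <<[set (s ^+ 2)%g; t]>>%G; <<[set (s ^+ 2)%g; (s * t)%g]>>%G].
Definition Ks : seq {group gT} :=
    [:: <[(s ^+ 3)%g]>%G; <[t]>%G; <[(s * t)%g]>%G; <[(s ^+ 2)%g]>%G;
        <<[set s; t]>>%G; <<[set s; t]>>%G].

Lemma memH (i : 'I_(size Hs)) c : (e c \in nth 1%G Hs i) = Sp i c.
Proof.
move: grpchk_ok => /and5P[g1 g3 g4 g5 _].
case: i => [[|[|[|[|[|[|i]]]]]] hi] //=.
- by rewrite inE -e_c0 (inj_eq e_inj) /Sp /= inE.
- by rewrite Es3 Et (gen_mem2 g1).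
- by rewrite Es3 Et (gen_mem2 g1).
- by rewrite Es1 /cycle (gen_mem1 g3).
- by rewrite Es2 Et (gen_mem2 g4).
- by rewrite Es2 Est (gen_mem2 g5).
Qed.

Lemma allTp4 c : Tp 4 c. Proof. by move: c; apply: allcP; vm_compute. Qed.
Lemma allTp5 c : Tp 5 c. Proof. by move: c; apply: allcP; vm_compute. Qed.

Lemma memK (j : 'I_(size Ks)) c : (e c \in nth 1%G Ks j) = Tp j c.
Proof.
move: grpchk_ok => /and5P[_ _ _ _ /and4P[k0 k1 k2 k3]].
case: j => [[|[|[|[|[|[|j]]]]]] hj] //=.
- by rewrite Es3 /cycle (gen_mem1 k0).
- by rewrite Et /cycle (gen_mem1 k1).
- by rewrite Est /cycle (gen_mem1 k2).
- by rewrite Es2 /cycle (gen_mem1 k3).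
- by rewrite e_inG allTp4.
- by rewrite e_inG allTp5.
Qed.


Local Notation GG := (<<[set s; t]>>%G).

Lemma lcoset_eq_code (K : {group gT}) (P : pred code) :
  (forall c, (e c \in K) = P c) ->
  forall b b', (e b *: K == e b' *: K) = P (mc (ic b) b').
Proof.
move=> hK b b'; rewrite eq_sym; apply/eqP/idP => [/lcoset_eqP|h].
  by rewrite mem_lcoset -e_ic -e_mul hK.
by apply/lcoset_eqP; rewrite mem_lcoset -e_ic -e_mul hK.
Qed.

Lemma lcosets_rep (K : {group gT}) (P : pred code) (R : seq code) :
  (forall c, (e c \in K) = P c) -> coschk P R ->
  forall C, C \in lcosets K GG -> exists2 b, b \in R & C = e b *: K.
Proof.
move=> hK /and3P[_ _ /allcP cov] C /lcosetsP[x /G_e [a ->] ->].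
case/hasP: (cov a) => b bR hb; exists b => //.
by apply/eqP; rewrite eq_sym (lcoset_eq_code hK).
Qed.

Lemma sum_lcosets (K : {group gT}) (P : pred code) (R : seq code) (F : {set gT} -> int) :
  (forall c, (e c \in K) = P c) -> coschk P R ->
  (\sum_(C in lcosets K GG) F C = \sum_(b <- R) F (e b *: K)%g)%R.
Proof.
move=> hK chk; have := chk; case/and3P => /allP inj uR _.
rewrite -(big_map (fun b => e b *: K) xpredT F) big_uniq; last first.
  rewrite map_inj_in_uniq // => b b' bR b'R /eqP.
  rewrite (lcoset_eq_code hK) => h.
  by move/allP: (inj b bR) => /(_ b' b'R); rewrite h => /eqP.
apply: eq_bigl => C; apply/idP/idP => [/(lcosets_rep hK chk) [b bR ->]|].
  by apply: map_f.
by case/mapP => b _ ->; apply/lcosetsP; exists (e b); rewrite ?e_inG.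
Qed.

Lemma sumfE (T : Type) (r : seq T) (F : T -> int) : (\sum_(x <- r) F x)%R = sumf r F.
Proof. by elim: r => [|x r IH]; rewrite ?big_nil ?big_cons ?IH. Qed.

Lemma sum_ord6 (F : nat -> int) : (\sum_(i < 6) F i)%R = sumf (iota 0 6) F.
Proof. by rewrite -(big_mkord xpredT) /index_iota subn0 sumfE. Qed.

Definition relG (C D : {set gT}) : pred code :=
  fun c => has (fun x => (e x \in C) && (e (mc x c) \in D)) allc.

Lemma wsel_eq tb (P Q : pred code) : P =1 Q -> wsel tb P = wsel tb Q.
Proof. by move=> h; rewrite /wsel (eq_has h) (eq_find h). Qed.

Lemma relG_tr g C D : g \in GG -> relG (g *: C) (g *: D) =1 relG C D.
Proof.
case/G_e => a -> c; rewrite /relG; apply/hasP/hasP => [[x _]|[x _ hx]].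
  rewrite !mem_lcoset -e_ic -!e_mul -mcA => hx.
  by exists (mc (ic a) x) => //; apply: mem_allc.
exists (mc a x); first exact: mem_allc.
by rewrite !mem_lcoset -e_ic -!e_mul mcKl mcA mcKl.
Qed.

Lemma relG_code (H K : {group gT}) (P Q : pred code) a b :
  (forall c, (e c \in H) = P c) -> (forall c, (e c \in K) = Q c) ->
  relG (e a *: H) (e b *: K) =1 relc P c0 Q (mc (ic a) b).
Proof.
move=> hH hK c.
rewrite -(relG_tr _ _ (e_inG (ic a))) e_ic lcosetK -lcosetM -e_ic -e_mul.
rewrite /relG /relc; apply: eq_has => x.
by rewrite hH ic_c0 mc0 mem_lcoset -e_ic -e_mul hK.
Qed.


Definition MM (p : pidx Hs) (q : pidx Ks) : int := wsel (wMt p.1 q.1) (relG p.2 q.2).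
Definition NN (q : pidx Ks) (p : pidx Hs) : int := wsel (wNt q.1 p.1) (relG q.2 p.2).

Lemma check3P i j d : (i < 6)%N -> (j < 6)%N ->
  wsel (wMt i j) (relc (Sp i) c0 (Tp j) d) = fM i j d /\
  wsel (wNt j i) (relc (Tp j) c0 (Sp i) d) = fN j i d.
Proof.
move=> hi hj; move/allP: check3_ok => /(_ i); rewrite mem_iota add0n hi => /(_ isT).
by move/allP => /(_ j); rewrite mem_iota add0n hj => /(_ isT) /allP /(_ d (mem_allc d)) /andP[/eqP -> /eqP ->].
Qed.

Lemma MM_val (i : 'I_(size Hs)) (j : 'I_(size Ks)) a b :
  MM (i, e a *: nth 1%G Hs i) (j, e b *: nth 1%G Ks j) = fM i j (mc (ic a) b).
Proof.
rewrite /MM /= (wsel_eq _ (relG_code _ _ (memH i) (memK j))).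
by case: (check3P (mc (ic a) b) (ltn_ord i) (ltn_ord j)).
Qed.

Lemma NN_val (i : 'I_(size Hs)) (j : 'I_(size Ks)) a b :
  NN (j, e b *: nth 1%G Ks j) (i, e a *: nth 1%G Hs i) = fN j i (mc (ic b) a).
Proof.
rewrite /NN /= (wsel_eq _ (relG_code _ _ (memK j) (memH i))).
by case: (check3P (mc (ic b) a) (ltn_ord i) (ltn_ord j)).
Qed.

Lemma chkH (i : 'I_(size Hs)) : coschk (Sp i) (RhL i).
Proof.
by move/allP: coschk_ok => /(_ i); rewrite mem_iota add0n (ltn_ord i) => /(_ isT) /andP[].
Qed.

Lemma chkK (j : 'I_(size Ks)) : coschk (Tp j) (RkL j).
Proof.
by move/allP: coschk_ok => /(_ j); rewrite mem_iota add0n (ltn_ord j) => /(_ isT) /andP[].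
Qed.

Lemma sum_BK (F : pidx Ks -> int) :
  (\sum_(q in pbasis GG Ks) F q =
   \sum_(j : 'I_(size Ks)) \sum_(b <- RkL j) F (j, e b *: nth 1%G Ks j)%g)%R.
Proof.
transitivity (\sum_(q : pidx Ks | xpredT q.1 && (q.2 \in lcosets (nth 1%G Ks q.1) GG))
                 (fun j C => F (j, C)) q.1 q.2)%R.
  by apply: eq_big => [q|[j C] _] //; rewrite inE.
transitivity (\sum_(j : 'I_(size Ks)) \sum_(C | C \in lcosets (nth 1%G Ks j) GG) F (j, C))%R.
  by rewrite (pair_big_dep xpredT (fun (j : 'I_(size Ks)) (C : {set gT}) => C \in lcosets (nth 1%G Ks j) GG) (fun (j : 'I_(size Ks)) C => F (j, C))).
apply: eq_bigr => j _.
exact: (sum_lcosets (fun C => F (j, C)) (memK j) (chkK j)).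
Qed.

Lemma sum_BH (F : pidx Hs -> int) :
  (\sum_(p in pbasis GG Hs) F p =
   \sum_(i : 'I_(size Hs)) \sum_(a <- RhL i) F (i, e a *: nth 1%G Hs i)%g)%R.
Proof.
transitivity (\sum_(p : pidx Hs | xpredT p.1 && (p.2 \in lcosets (nth 1%G Hs p.1) GG))
                 (fun i C => F (i, C)) p.1 p.2)%R.
  by apply: eq_big => [p|[i C] _] //; rewrite inE.
transitivity (\sum_(i : 'I_(size Hs)) \sum_(C | C \in lcosets (nth 1%G Hs i) GG) F (i, C))%R.
  by rewrite (pair_big_dep xpredT (fun (i : 'I_(size Hs)) (C : {set gT}) => C \in lcosets (nth 1%G Hs i) GG) (fun (i : 'I_(size Hs)) C => F (i, C))).
apply: eq_bigr => i _.
exact: (sum_lcosets (fun C => F (i, C)) (memH i) (chkH i)).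
Qed.


Lemma iota6 (i : nat) : (i < 6)%N -> i \in iota 0 6.
Proof. by rewrite mem_iota add0n. Qed.

Lemma orth1 : {in pbasis GG Hs &, forall p p',
  (\sum_(q in pbasis GG Ks) MM p q * NN q p')%R = (p == p')%:R}.
Proof.
move=> [i C] [i' C']; rewrite !inE /=.
move=> /(lcosets_rep (memH i) (chkH i)) [a aR ->].
move=> /(lcosets_rep (memH i') (chkH i')) [a' a'R ->].
rewrite sum_BK.
under eq_bigr => j _ do under eq_bigr => b _ do rewrite MM_val NN_val.
under eq_bigr => j _ do rewrite sumfE.
rewrite (sum_ord6 (fun j => sumf (RkL j) (fun b => fM i j (mc (ic a) b) * fN j i' (mc (ic b) a')))%R).
move/allP: check1_ok => /(_ i (iota6 (ltn_ord i))) /allP /(_ i' (iota6 (ltn_ord i'))).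
move=> /allP /(_ a aR) /allP /(_ a' a'R) /eqP ->.
rewrite xpair_eqE; case: (eqVneq i i') => [<-|ne] /=.
  by rewrite eqxx /= (lcoset_eq_code (memH i)); case: (Sp i _).
by have -> : (i == i' :> nat) = false by apply/negbTE.
Qed.

Lemma orth2 : {in pbasis GG Ks &, forall q q',
  (\sum_(p in pbasis GG Hs) NN q p * MM p q')%R = (q == q')%:R}.
Proof.
move=> [j D] [j' D']; rewrite !inE /=.
move=> /(lcosets_rep (memK j) (chkK j)) [b bR ->].
move=> /(lcosets_rep (memK j') (chkK j')) [b' b'R ->].
rewrite sum_BH.
under eq_bigr => i _ do under eq_bigr => a _ do rewrite MM_val NN_val.
under eq_bigr => i _ do rewrite sumfE.
rewrite (sum_ord6 (fun i => sumf (RhL i) (fun a => fN j i (mc (ic b) a) * fM i j' (mc (ic a) b')))%R).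
move/allP: check2_ok => /(_ j (iota6 (ltn_ord j))) /allP /(_ j' (iota6 (ltn_ord j'))).
move=> /allP /(_ b bR) /allP /(_ b' b'R) /eqP ->.
rewrite xpair_eqE; case: (eqVneq j j') => [<-|ne] /=.
  by rewrite eqxx /= (lcoset_eq_code (memK j)); case: (Tp j _).
by have -> : (j == j' :> nat) = false by apply/negbTE.
Qed.

Lemma main_iso : perm_lattice_iso GG Hs Ks.
Proof.
apply: (kernel_iso (M := MM) (N := NN)).
- by move=> g p q gG; apply: wsel_eq; apply: relG_tr.
- exact: orth1.
- exact: orth2.
Qed.

End Spec.

End PilotAux.

Theorem proposition6p7 (gT : finGroupType) (s t : gT)
  (hs : s ^+ 6 = 1) (ht : t ^+ 2 = 1) (hts : t * s * t^-1 = s^-1)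
  (hG : #|<<[set s; t]>>| = 12%N) :
  perm_lattice_iso <<[set s; t]>>%G
    [:: (1%G : {group gT}); <<[set (s ^+ 3)%g; t]>>%G; <<[set (s ^+ 3)%g; t]>>%G; <[s]>%G;
        <<[set (s ^+ 2)%g; t]>>%G; <<[set (s ^+ 2)%g; (s * t)%g]>>%G]
    [:: <[(s ^+ 3)%g]>%G; <[t]>%G; <[(s * t)%g]>%G; <[(s ^+ 2)%g]>%G;
        <<[set s; t]>>%G; <<[set s; t]>>%G].
Proof.
exact: (PilotAux.main_iso hs ht hts hG).
Qed.
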